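(* In the Node-Capacitated Clique model, there is an algorithm (the Aggregate-and-Broadcast Algorithm) that solves every Aggregate-and-Broadcast Problem in $O(\log n)$ rounds: given a distributive aggregate function $f$ and a set $A\subseteq V$ in which each member of $A$ stores exactly one input value, at the end every node of $V$ knows $f(\text{multiset of inputs of } A)$.
   Context: Node-Capacitated Clique model: a set $V$ of $n$ nodes with unique identifiers from $\{0,\dots,n-1\}$; every node knows the identifiers of all nodes. Computation proceeds in synchronous rounds; in each round every node may perform arbitrary local computation and send distinct messages of $O(\log n)$ bits each to up to $O(\log n)$ other nodes; messages are received at the beginning of the next round. A node can receive at most $O(\log n)$ messages per round; if more are sent to it, it receives an arbitrary subset of $O(\log n)$ of them and the rest are dropped. An aggregate function $f$ maps a multiset $S$ of values to a value $f(S)$; it is distributive if there is an aggregate function $g$ such that for every multiset $S$ and every partition $S_1,\dots,S_\ell$ of $S$, $f(S)=g(f(S_1),\dots,f(S_\ell))$ (e.g. MAX, MIN, SUM). *)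

(* Defs.v *)
From Stdlib Require Import Sorting.Permutation.
From mathcomp Require Import all_boot.
Set Implicit Arguments. Unset Strict Implicit. Unset Printing Implicit Defensive.

(* A multiset of values of type T is represented by a list, up to permutation. *)
Definition aggregate_fun (T : Type) (f : seq T -> T) : Prop :=
  forall s1 s2 : seq T, Permutation s1 s2 -> f s1 = f s2.

Definition distributive_with (T : Type) (f g : seq T -> T) : Prop :=
  [/\ aggregate_fun f, aggregate_fun g &
      forall (S : seq T) (Ss : seq (seq T)),
        all (fun s => ~~ nilp s) Ss -> Permutation (flatten Ss) S ->
        f S = g (map f Ss)].

(* ell n : the log n unit, = floor(log2 n) + 1 (>= 1). *)
Definition ell (n : nat) : nat := (trunc_log 2 n).+1.

(* capacity kappa * log n (messages per round, bits per message) *)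
Definition cap (kappa n : nat) : nat := kappa * ell n.

(* A message: at most kappa opaque values (each an O(log n)-bit word)
   together with a bit string of at most kappa * log n bits. *)
Definition msg (T : Type) : Type := (seq T * seq bool)%type.

(* Each node starts from its identifier and its input (Some v iff it is in A).  Local computation is arbitrary. *)
Unset Implicit Arguments.
Record node_prog (T : Type) (n : nat) := NodeProg {
  st_type : Type;
  p_init : 'I_n -> option T -> st_type;
  p_send : 'I_n -> st_type -> seq ('I_n * msg T);
  p_recv : 'I_n -> st_type -> seq ('I_n * msg T) -> st_type;
  p_out  : st_type -> option T }.
Set Implicit Arguments.
Arguments st_type {T n}.
Arguments p_init {T n}.
Arguments p_send {T n}.
Arguments p_recv {T n}.
Arguments p_out {T n}.

(* An algorithm: uniform in the (opaque) value type, in f, g (the given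
   distributive function and its combiner) and in n. *)
Definition algorithm : Type :=
  forall (T : Type) (f g : seq T -> T) (n : nat), node_prog T n.

Definition valid_send (kappa : nat) (T : Type) (n : nat) (u : 'I_n)
    (l : seq ('I_n * msg T)) : Prop :=
  [/\ size l <= cap kappa n, uniq (map fst l), all (fun p => p.1 != u) l &
      all (fun p => (size p.2.1 <= kappa) && (size p.2.2 <= cap kappa n)) l].

Definition inbox (T : Type) (n : nat) (P : node_prog T n)
    (s : 'I_n -> st_type P) (v : 'I_n) : seq ('I_n * msg T) :=
  flatten [seq [seq (u, p.2) | p <- p_send P u (s u) & p.1 == v] | u <- enum 'I_n].

(* An adversary resolves receive overflow: adv r v l is what v receives in
   round r when l was sent to it. *)
Definition adversary (T : Type) (n : nat) : Type :=
  nat -> 'I_n -> seq ('I_n * msg T) -> seq ('I_n * msg T).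

Definition legal_adversary (kappa : nat) (T : Type) (n : nat) (adv : adversary T n)
  : Prop :=
  forall r v l,
    (size l <= cap kappa n -> adv r v l = l) /\
    (cap kappa n < size l ->
       exists m : bitseq, adv r v l = mask m l /\ size (adv r v l) = cap kappa n).

Fixpoint exec (T : Type) (n : nat) (P : node_prog T n) (inp : 'I_n -> option T)
    (adv : adversary T n) (r : nat) : 'I_n -> st_type P :=
  match r with
  | 0 => fun u => p_init P u (inp u)
  | r'.+1 => let s := exec P inp adv r' in
             fun v => p_recv P v (s v) (adv r' v (@inbox _ _ P s v))
  end.

Definition inputs (T : Type) (n : nat) (inp : 'I_n -> option T) : seq T :=
  pmap inp (enum 'I_n).

Arguments inbox {T n} P s v.
Arguments exec {T n} P inp adv r _.
Arguments valid_send kappa {T n} u l.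
Arguments legal_adversary kappa {T n} adv.

(* Main.v *)
Require Import Defs.
From mathcomp Require Import all_boot.
From mathcomp Require Import zify.
Set Implicit Arguments. Unset Strict Implicit. Unset Printing Implicit Defensive.

Arguments ell : simpl never.
Definition inpN T n (inp : 'I_n -> option T) (i : nat) : option T :=
  if insub i is Some o then inp o else None.
Definition agg T (f : seq T -> T) (S : seq T) : option T :=
  if S is [::] then None else Some (f S).
Definition comb T (g : seq T -> T) (a b : option T) : option T :=
  match a, b with Some x, Some y => Some (g [:: x; y]) | None, _ => b | _, None => a end.
Definition enc T (o : option T) : msg T := (if o is Some x then [:: x] else [::], [::]).
Definition dec T (m : msg T) : option T := ohead m.1.
Definition send_to T n (o : option 'I_n) (m : msg T) : seq ('I_n * msg T) :=
  if o is Some w then [:: (w, m)] else [::].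

Definition psend T n (u : 'I_n) (st : nat * option T) : seq ('I_n * msg T) :=
  let L := ell n in let r := st.1 in
  if r < L then (if u %% 2^r.+1 == 2^r then send_to (insub (u - 2^r)) (enc st.2) else [::])
  else if r < 2 * L then
    (let k := (2 * L).-1 - r in
     if 2^k.+1 %| u then send_to (insub (u + 2^k)) (enc st.2) else [::])
  else [::].

Definition precv T (g : seq T -> T) n (u : 'I_n) (st : nat * option T)
   (l : seq ('I_n * msg T)) : nat * option T :=
  (st.1.+1, if st.1 < ell n then foldl (fun acc p => comb g acc (dec p.2)) st.2 l
            else if l is p :: _ then dec p.2 else st.2).

Definition prog T (f g : seq T -> T) n : node_prog T n :=
  NodeProg T n (nat * option T) (fun _ o => (0, omap (fun x => f [:: x]) o))
    (@psend T n) (@precv T g n)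
    (fun st => Some (if st.2 is Some x then x else f [::])).

Definition the_alg : algorithm := fun T f g n => prog f g n.

Definition blk T n (inp : 'I_n -> option T) (u r : nat) : seq T :=
  pmap (inpN inp) (iota u (2 ^ r)).

Lemma arA x u : 0 < x -> (2 * x) %| u -> (u + x) %% (2 * x) = x.
Proof.
move=> x0 /dvdnP[q ->]. rewrite modnMDl modn_small //. lia.
Qed.

Lemma arB x v : 0 < x -> x %| v -> (v %% (2 * x) == 0) || (v %% (2 * x) == x).
Proof.
move=> x0 xv.
have h1 : (v %% (2 * x)) %% x = 0.
  rewrite (modn_dvdm v (dvdn_mull 2 (dvdnn x))). by apply/eqP.
have h2 : v %% (2 * x) < 2 * x by rewrite ltn_mod; lia.
move: h1 h2; set a := v %% (2 * x) => h1 h2.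
have := divn_eq a x; rewrite h1 addn0 => ha.
have : a %/ x < 2.
  by rewrite ltn_divLR //; lia.
case: (a %/ x) ha => [|[|m]] ha //.
- by rewrite ha.
- by rewrite ha mul1n eqxx orbT.
Qed.

Lemma arC x v : 0 < x -> v %% (2 * x) = x -> (2 * x) %| (v - x) /\ x <= v.
Proof.
move=> x0 hv.
have hd := divn_eq v (2 * x). rewrite hv in hd.
split; last by rewrite hd leq_addl.
apply/dvdnP; exists (v %/ (2 * x)). by rewrite {1}hd addnK.
Qed.
Lemma flat_nil (A : eqType) B (F : A -> seq B) (s : seq A) :
  (forall a, a \in s -> F a = [::]) -> flatten [seq F a | a <- s] = [::].
Proof.
elim: s => //= a s IH H; rewrite H ?mem_head // IH // => b bs.
by apply: H; rewrite in_cons bs orbT.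
Qed.

Lemma flat_one (A : eqType) B (F : A -> seq B) (s : seq A) a0 :
  uniq s -> a0 \in s -> (forall a, a != a0 -> F a = [::]) ->
  flatten [seq F a | a <- s] = F a0.
Proof.
elim: s => //= a s IH /andP[ns us]; rewrite in_cons => H0 H.
case: (eqVneq a0 a) => [e|ne].
- subst a0. rewrite flat_nil ?cats0 // => b bs; apply: H.
  by apply: contraNneq ns => <-.
- rewrite H 1?eq_sym //= IH //. by move: H0; rewrite (negPf ne).
Qed.

Lemma flat_cond n B (F : 'I_n -> seq B) (y : nat) (X : 'I_n -> seq B) :
  (forall u : 'I_n, F u = if val u == y then X u else [::]) ->
  flatten [seq F u | u <- enum 'I_n] = if insub y is Some u0 then X u0 else [::].
Proof.
move=> HF; case: insubP => [u0 _ Hu0|Hn].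
- rewrite (@flat_one _ _ F _ u0) ?enum_uniq ?mem_enum // ?HF ?Hu0 ?eqxx //.
  move=> a ne; rewrite HF; case: eqP => // e.
  by move: ne; rewrite -(inj_eq val_inj) Hu0 e eqxx.
- apply: flat_nil => u _; rewrite HF; case: eqP => // e.
  by move: Hn; rewrite -e ltn_ord.
Qed.

Lemma filt_send T n (o : option 'I_n) (m : msg T) (u v : 'I_n) (b : bool) :
  [seq (u, p.2) | p <- (if b then send_to o m else [::]) & p.1 == v]
  = if b && (o == Some v) then [:: (u, m)] else [::].
Proof.
case: b => //; case: o => [w|] //=.
by case: eqP => [->|ne]; rewrite ?eqxx //; case: eqP => // [[e]]; case: ne.
Qed.

Lemma insub_eqSome n (x : nat) (v : 'I_n) : (insub x == Some v) = (x == val v).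
Proof.
case: insubP => [w _ <-|Hn].
- by rewrite /eq_op /=.
- apply/esym/negbTE; apply: contra Hn => /eqP ->; exact: ltn_ord.
Qed.

Lemma inpN_ge T n (inp : 'I_n -> option T) i : n <= i -> inpN inp i = None.
Proof. by move=> h; rewrite /inpN insubN // -leqNgt. Qed.

Lemma pmap_inpN_ge T n (inp : 'I_n -> option T) m k :
  n <= m -> pmap (inpN inp) (iota m k) = [::].
Proof.
elim: k m => //= k IH m h; rewrite inpN_ge // IH //; lia.
Qed.

Lemma blk_all T n (inp : 'I_n -> option T) :
  blk inp 0 (ell n) = inputs inp.
Proof.
have h : n <= 2 ^ ell n by apply: ltnW; apply: trunc_log_ltn.
rewrite /blk -(subnKC h) iotaD pmap_cat add0n (pmap_inpN_ge inp _ (leqnn n)) cats0.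
rewrite /inputs -val_enum_ord.
elim: (enum 'I_n) => //= a s ->.
by rewrite /inpN valK.
Qed.

Lemma blkS T n (inp : 'I_n -> option T) u r :
  blk inp u r.+1 = blk inp u r ++ blk inp (u + 2 ^ r) r.
Proof. by rewrite /blk expnS mul2n -addnn iotaD pmap_cat. Qed.

Lemma comb_agg T (f g : seq T -> T) S1 S2 : distributive_with f g ->
  comb g (agg f S1) (agg f S2) = agg f (S1 ++ S2).
Proof.
case=> _ _ H.
case: S1 => [|a s1]; case: S2 => [|b s2] //=; first by rewrite cats0.
congr Some; symmetry.
have -> : [:: f (a :: s1); f (b :: s2)] = map f [:: a :: s1; b :: s2] by [].
apply: H => //=. by rewrite cats0.
Qed.

Lemma inbox1 T (f g : seq T -> T) n (s : 'I_n -> nat * option T) r (v : 'I_n) :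
  r < ell n -> (forall u, (s u).1 = r) -> 2 ^ r.+1 %| v ->
  inbox (prog f g n) s v =
    if insub (v + 2 ^ r) is Some u0 then [:: (u0, enc (s u0).2)] else [::].
Proof.
move=> hr hs hv; rewrite /inbox; apply: flat_cond => u /=.
rewrite /psend hs hr filt_send insub_eqSome.
have x0 : 0 < 2 ^ r by rewrite expn_gt0.
have -> : (u %% 2 ^ r.+1 == 2 ^ r) && (u - 2 ^ r == v) = (val u == v + 2 ^ r).
  apply/andP/eqP => [[/eqP h1 /eqP h2]|h].
  - have hl := leq_mod u (2 ^ r.+1); rewrite h1 in hl; by rewrite -h2 subnK.
  - rewrite h; split; last by apply/eqP; lia.
    by apply/eqP; rewrite expnS; apply: arA => //; rewrite -expnS.
by [].
Qed.

Lemma inbox2a T (f g : seq T -> T) n (s : 'I_n -> nat * option T) r k (v : 'I_n) :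
  ell n <= r < 2 * ell n -> k = (2 * ell n).-1 - r ->
  (forall u, (s u).1 = r) -> 2 ^ k.+1 %| v ->
  inbox (prog f g n) s v = [::].
Proof.
move=> /andP[hr1 hr2] hk hs hv; rewrite /inbox; apply: flat_nil => u _ /=.
rewrite /psend hs ltnNge hr1 /= hr2 -hk filt_send insub_eqSome.
have x0 : 0 < 2 ^ k by rewrite expn_gt0.
case: (boolP (2 ^ k.+1 %| u)) => //= hu; case: eqP => // e.
move: hv; rewrite /dvdn -e expnS arA -?expnS //; lia.
Qed.

Lemma inbox2b T (f g : seq T -> T) n (s : 'I_n -> nat * option T) r k (v : 'I_n) :
  ell n <= r < 2 * ell n -> k = (2 * ell n).-1 - r ->
  (forall u, (s u).1 = r) -> v %% 2 ^ k.+1 = 2 ^ k ->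
  inbox (prog f g n) s v =
    if insub (v - 2 ^ k) is Some u0 then [:: (u0, enc (s u0).2)] else [::].
Proof.
move=> /andP[hr1 hr2] hk hs hv; rewrite /inbox; apply: flat_cond => u /=.
rewrite /psend hs ltnNge hr1 /= hr2 -hk filt_send insub_eqSome.
have x0 : 0 < 2 ^ k by rewrite expn_gt0.
have hv' : v %% (2 * 2 ^ k) = 2 ^ k by rewrite -expnS.
have [hd hle] := arC x0 hv'.
have -> : (2 ^ k.+1 %| u) && (u + 2 ^ k == v) = (val u == v - 2 ^ k).
  rewrite expnS.
  apply/andP/eqP => [[h1 /eqP h2]|h]; first by rewrite -h2 addnK.
  have h' : nat_of_ord u = v - 2 ^ k := h.
  rewrite h'; split => //; apply/eqP; rewrite subnK //.
by [].
Qed.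

Lemma precv_down T (g : seq T -> T) n (u : 'I_n) st l : ell n <= st.1 ->
  (precv g u st l).2 = if l is p :: _ then dec p.2 else st.2.
Proof. by rewrite /precv leqNgt => /negbTE ->. Qed.

Lemma precv_up T (g : seq T -> T) n (u : 'I_n) st l : st.1 < ell n ->
  (precv g u st l).2 = foldl (fun acc p => comb g acc (dec p.2)) st.2 l.
Proof. by rewrite /precv => ->. Qed.

Lemma dec_enc T (o : option T) : dec (enc o) = o.
Proof. by case: o. Qed.

Lemma vs_nil kappa T n (u : 'I_n) : valid_send kappa u ([::] : seq ('I_n * msg T)).
Proof. by rewrite /valid_send. Qed.

Lemma vs_to kappa T n (u : 'I_n) (o : option 'I_n) (x : option T) :
  0 < kappa -> (forall w, o = Some w -> w != u) ->
  valid_send kappa u (send_to o (enc x)).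
Proof.
move=> kp; case: o => [w|] hw; last exact: vs_nil.
have cap1 : 0 < cap kappa n by rewrite /cap muln_gt0 kp.
rewrite /valid_send /=; split => //; first by rewrite andbT; exact: hw.
by rewrite andbT; case: x => [x|] //=; rewrite kp.
Qed.

Theorem theorem2p2 :
  forall kappa : nat, 0 < kappa ->
  exists (alg : algorithm) (C : nat),
    forall (n : nat) (T : Type) (f g : seq T -> T),
      distributive_with f g ->
      forall (inp : 'I_n -> option T) (adv : adversary T n),
        legal_adversary kappa adv ->
        let P := alg T f g n in
        (forall r, r < C * ell n -> forall u : 'I_n,
            valid_send kappa u (p_send P u (exec P inp adv r u))) /\
        (forall v : 'I_n,
            p_out P (exec P inp adv (C * ell n) v) = Some (f (inputs inp))).
Proof.
move=> kappa kp; exists the_alg, 2 => n T f g Hd inp adv Hadv P.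
have cap1 : 0 < cap kappa n by rewrite /cap muln_gt0 kp.
have hcnt : forall r u, (exec P inp adv r u).1 = r.
  by elim => [|r IH] u //=; rewrite IH.
have adv_id : forall r v l, size l <= 1 -> adv r v l = l.
  by move=> r v l h; apply: (Hadv r v l).1; apply: leq_trans h cap1.
have step : forall r v, exec P inp adv r.+1 v =
   precv g v (exec P inp adv r v) (adv r v (inbox P (exec P inp adv r) v)) by [].
have nlt : n < 2 ^ ell n by apply: trunc_log_ltn.
have ph1 : forall r, r <= ell n -> forall u : 'I_n, 2 ^ r %| u ->
    (exec P inp adv r u).2 = agg f (blk inp u r).
  elim => [|r IH] hr u hu.
  - by rewrite /= /blk /= /inpN valK; case: (inp u).
  - have hu' : 2 ^ r %| u by apply: dvdn_trans hu; apply: dvdn_exp2l.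
    rewrite step /precv hcnt hr (inbox1 f g hr) ?hcnt //.
    case: insubP => [u0 _ Hu0 | Hn] /=.
    + rewrite adv_id //= dec_enc IH ?(ltnW hr) // IH ?(ltnW hr) //; last first.
        by rewrite Hu0 dvdn_add.
      by rewrite comb_agg // blkS Hu0.
    + rewrite adv_id //= IH ?(ltnW hr) // blkS; rewrite [blk inp (u + _) r]/blk pmap_inpN_ge ?cats0 //.
      by rewrite leqNgt.
have ph2 : forall j, j <= ell n -> forall u : 'I_n, 2 ^ (ell n - j) %| u ->
    (exec P inp adv (ell n + j) u).2 = agg f (inputs inp).
  elim => [|j IH] hj u hu.
  - rewrite subn0 in hu; rewrite addn0 ph1 //.
    have u0 : nat_of_ord u = 0.
      case: (posnP u) => [//|hpos]; have := dvdn_leq hpos hu.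
      move=> h; have := ltn_ord u; lia.
    by rewrite u0 blk_all.
  - set k := ell n - j.+1.
    have hk : k = (2 * ell n).-1 - (ell n + j) by rewrite /k; lia.
    have ek : ell n - j = k.+1 by rewrite /k; lia.
    have hr : ell n <= ell n + j < 2 * ell n by apply/andP; split; lia.
    have x0 : 0 < 2 ^ k by rewrite expn_gt0.
    rewrite addnS step precv_down ?hcnt ?leq_addr //.
    have := arB x0 hu; rewrite -expnS => /orP[/eqP h0|/eqP h1].
    + rewrite (inbox2a f g hr hk) ?hcnt // ?adv_id //; last by rewrite /dvdn h0.
      apply: IH; first lia. by rewrite ek /dvdn h0.
    + rewrite (inbox2b f g hr hk) ?hcnt //.
      case: insubP => [u0 _ Hu0 | Hn] /=.
      * rewrite adv_id //= dec_enc; apply: IH; first lia.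
        rewrite ek Hu0; have h1' : u %% (2 * 2 ^ k) = 2 ^ k by rewrite -expnS.
        by have [hd _] := arC x0 h1'; rewrite expnS.
      * by move: Hn; rewrite (leq_ltn_trans (leq_subr _ _) (ltn_ord u)).
split.
- move=> r hr u; rewrite /= /psend hcnt.
  case: ifP => h1.
  + case: ifP => h2; last exact: vs_nil.
    apply: vs_to => // w; case: insubP => // w' _ hw [<-].
    apply/negP => /eqP e; move: hw; rewrite e.
    have := leq_mod u (2 ^ r.+1); rewrite (eqP h2) => hl.
    have : 0 < 2 ^ r by rewrite expn_gt0.
    move=> hp hv; have hv2 : nat_of_ord u = u - 2 ^ r := hv; lia.
  + rewrite hr.
    case: ifP => h2; last exact: vs_nil.
    apply: vs_to => // w; case: insubP => // w' _ hw [<-].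
    apply/negP => /eqP e; move: hw; rewrite e.
    have : 0 < 2 ^ ((2 * ell n).-1 - r) by rewrite expn_gt0.
    move=> hp hv; have hv2 : nat_of_ord u = u + 2 ^ ((2 * ell n).-1 - r) := hv; lia.
- move=> v.
  have -> : 2 * ell n = ell n + ell n by lia.
  have h := ph2 (ell n) (leqnn _) v; rewrite subnn expn0 dvd1n in h.
  change (Some (if (exec P inp adv (ell n + ell n) v).2 is Some x then x else f [::])
          = Some (f (inputs inp))).
  by rewrite h // /agg; case: (inputs inp).
Qed.
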